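(* Let $M,N$ be weights of $\mathbb{R}^m,\mathbb{R}^n$, let $A\in\mathbb{R}^{m\times n}$ with $MA=AN$, and let $K\subseteq\mathbb{R}^n$ be a closed cone. Then $$(A\circ I\circ K)^{[*]}\subseteq (A^{[\dagger]})^{[*]}\circ I\circ K^{[*]}+\mathcal{N}\big((A\circ I)^{[*]}\big).$$ If moreover $A^{[\dagger]}\circ A\circ K\subseteq K$, then equality holds.
   Context: A weight is a real symmetric matrix $W$ with $W^2=I$. $\mathbb{R}^m$ and $\mathbb{R}^n$ carry weights $M\in\mathbb{R}^{m\times m}$ and $N\in\mathbb{R}^{n\times n}$, respectively. The indefinite inner product on the space with weight $W$ is $[x,y]=\langle x,Wy\rangle$. Indefinite matrix product: if $B$ has $p$ columns and $C$ has $p$ rows (or is a vector in $\mathbb{R}^p$), $p\in\{m,n\}$, and $W$ is the weight of $\mathbb{R}^p$, then $B\circ C:=BWC$. $I$ denotes an identity matrix of the appropriate size. Indefinite adjoint of $B\in\mathbb{R}^{p\times q}$: $B^{[*]}:=W_qB^TW_p$, where $W_p,W_q$ are the weights of $\mathbb{R}^p,\mathbb{R}^q$. Indefinite Moore–Penrose inverse: $A^{[\dagger]}$ is the unique $X\in\mathbb{R}^{n\times m}$ such that - $A\circ X\circ A=A$, - $X\circ A\circ X=X$, - $(A\circ X)^{[*]}=A\circ X$, - $(X\circ A)^{[*]}=X\circ A$. It equals $NA^\dagger M$. Range and null space: for a matrix $B$ with $q$ columns, $\mathcal{R}(B)=\{B\circ x:x\in\mathbb{R}^q\}$ and $\mathcal{N}(B)=\{x\in\mathbb{R}^q:B\circ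 x=0\}$. A cone is a nonempty set closed under addition and under multiplication by nonnegative scalars. For $S$ a subset of $\mathbb{R}^p$ with weight $W$, the dual is $S^{[*]}=\{x\in\mathbb{R}^p:[x,t]\ge0\ \forall t\in S\}$. For a matrix $B$ and a set $S$, $B\circ S=\{B\circ s:s\in S\}$. The sum of sets is the Minkowski sum. *)

(* Defs.v *)
From HB Require Import structures.
From mathcomp Require Import all_boot all_order all_algebra.
Set Implicit Arguments. Unset Strict Implicit. Unset Printing Implicit Defensive.
Import Order.TTheory GRing.Theory Num.Theory.
Local Open Scope ring_scope.

Section Indef.
Variable R : realFieldType.

Definition is_weight (p : nat) (W : 'M[R]_p) : Prop :=
  W^T = W /\ W *m W = 1%:M.

(* Indefinite product B o C := B W C, W the weight of R^p (the shared dim). *)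
Definition iprod (q p r : nat) (W : 'M[R]_p) (B : 'M[R]_(q, p)) (C : 'M[R]_(p, r))
  : 'M[R]_(q, r) := B *m W *m C.

Definition iadj (p q : nat) (Wp : 'M[R]_p) (Wq : 'M[R]_q) (B : 'M[R]_(p, q))
  : 'M[R]_(q, p) := Wq *m B^T *m Wp.

Definition iip (p : nat) (W : 'M[R]_p) (x y : 'cV[R]_p) : R :=
  (x^T *m (W *m y)) 0 0.

Definition vset (p : nat) := 'cV[R]_p -> Prop.

Definition subset_v (p : nat) (S T : vset p) : Prop := forall x, S x -> T x.

Definition idual (p : nat) (W : 'M[R]_p) (S : vset p) : vset p :=
  fun x => forall t, S t -> 0 <= iip W x t.

(* B o S = { B o s : s in S }, W the weight of the column space R^p of B. *)
Definition imgset (q p : nat) (W : 'M[R]_p) (B : 'M[R]_(q, p)) (S : vset p)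
  : vset q := fun y => exists2 s, S s & y = iprod W B s.

Definition msum (p : nat) (S T : vset p) : vset p :=
  fun y => exists a b, [/\ S a, T b & y = a + b].

Definition inull (p q : nat) (Wq : 'M[R]_q) (B : 'M[R]_(p, q)) : vset q :=
  fun x => iprod Wq B x = 0.

Definition is_cone (p : nat) (K : vset p) : Prop :=
  [/\ exists x, K x,
      forall x y, K x -> K y -> K (x + y)
    & forall (a : R) x, 0 <= a -> K x -> K (a *: x)].

(* Topologically closed (Euclidean/product topology, via the max-norm):
   the complement is open. *)
Definition is_closed (p : nat) (K : vset p) : Prop :=
  forall x, ~ K x -> exists2 e : R, 0 < e &
    forall y : 'cV[R]_p, (forall i, `|y i 0 - x i 0| < e) -> ~ K y.

(* X is the indefinite Moore-Penrose inverse of A (the unique such X). *)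
Definition is_indef_mp (m n : nat) (M : 'M[R]_m) (N : 'M[R]_n)
  (A : 'M[R]_(m, n)) (X : 'M[R]_(n, m)) : Prop :=
  [/\ iprod M (iprod N A X) A = A,
      iprod N (iprod M X A) X = X,
      iadj M M (iprod N A X) = iprod N A X
    & iadj N N (iprod M X A) = iprod M X A].

End Indef.

(* Main.v *)
Require Import Defs.
From HB Require Import structures.
From mathcomp Require Import all_boot all_order all_algebra.
Import Order.TTheory GRing.Theory Num.Theory.
Local Open Scope ring_scope.

Theorem theorem3p4 (R : realFieldType) (m n : nat)
  (M : 'M[R]_m) (N : 'M[R]_n) (A : 'M[R]_(m, n)) (X : 'M[R]_(n, m))
  (K : vset R n) :
  is_weight M -> is_weight N -> M *m A = A *m N ->
  is_cone K -> is_closed K ->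
  is_indef_mp M N A X ->
  subset_v (idual M (imgset N (iprod N A 1%:M) K))
    (msum (imgset N (iprod N (iadj N M X) 1%:M) (idual N K))
          (inull M (iadj M N (iprod N A 1%:M))))
  /\
  (subset_v (imgset N (iprod M X A) K) K ->
   forall y, idual M (imgset N (iprod N A 1%:M) K) y <->
     msum (imgset N (iprod N (iadj N M X) 1%:M) (idual N K))
          (inull M (iadj M N (iprod N A 1%:M))) y).
Proof.
move=> [MT MM] [NT NN] MA _ _ [H1 _ _ _].
have AtM : A^T *m M = N *m A^T by rewrite -NT -MT -!trmx_mul MA.
have H1' : A^T *m M *m X^T *m N *m A^T = A^T.
  move: H1; rewrite /iprod => /(congr1 trmx); rewrite !trmx_mul MT NT !mulmxA.
  by [].
have part1 : subset_v (idual M (imgset N (iprod N A 1%:M) K))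
    (msum (imgset N (iprod N (iadj N M X) 1%:M) (idual N K))
          (inull M (iadj M N (iprod N A 1%:M)))).
  move=> y Hy.
  pose a := M *m X^T *m N *m A^T *m y.
  exists a, (y - a); split; last by rewrite addrC subrK.
  - exists (A^T *m y); last first.
      by rewrite /a /iprod /iadj mulmx1 !mulmxA -(mulmxA _ N N) NN mulmx1.
    move=> t Kt.
    have := Hy (iprod N (iprod N A 1%:M) t) (ex_intro2 _ _ t Kt erefl).
    rewrite /iip /iprod mulmx1 -(mulmxA A N N) NN mulmx1 !mulmxA -(mulmxA _ M A) MA.
    by rewrite trmx_mul trmxK !mulmxA.
  - rewrite /inull /iprod /iadj mulmx1 trmx_mul NT !mulmxA NN mul1mx.
    rewrite -(mulmxA _ M M) MM mulmx1 mulmxBr /a !mulmxA H1' subrr //.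
split => // Hsub y; split; first exact: part1.
move=> [a [b [[z Hz ->] Hb ->]]] t [s Ks ->].
move: Hb; rewrite /inull /iprod /iadj mulmx1 trmx_mul NT !mulmxA NN mul1mx.
rewrite -(mulmxA _ M M) MM mulmx1 => Hb.
have Kx := Hsub _ (ex_intro2 _ _ s Ks erefl).
have := Hz _ Kx.
rewrite /iip /iprod /iadj !mulmx1.
set L := (_ *m _) 0 0; set L' := (_ *m _) 0 0.
suff -> : L' = L by [].
rewrite /L /L'; congr (_ 0 0).
rewrite raddfD /= mulmxDl.
have -> : b^T *m (M *m (A *m N *m N *m s)) = 0.
  have bA : b^T *m A = 0 by rewrite -(trmxK A) -trmx_mul Hb trmx0.
  by rewrite !mulmxA -(mulmxA _ N N) NN mulmx1 -(mulmxA _ M A) MA !mulmxA bA !mul0mx.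
rewrite addr0 !trmx_mul !trmxK MT NT.
rewrite !mulmxA; do ![rewrite -(mulmxA _ N N) NN mulmx1 | rewrite -(mulmxA _ M M) MM mulmx1
  | rewrite -(mulmxA _ M A) MA !mulmxA].
by [].
Qed.
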